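(* Let $\{\gamma_k\}$ be strictly positive numbers with $\gamma_k\to\infty$, and $\{g_k\}$ probability generating functions. Define $$G_k(z)=k\gamma_k[g_k(e^{-z/k})-e^{-z/k}],\ z\ge0,\qquad \phi_k(z)=k\gamma_k[g_k(1-z/k)-(1-z/k)],\ 0\le z\le k.$$ Then $\{G_k\}$ is uniformly Lipschitz on each bounded interval if and only if $\{\phi_k\}$ is. In this case $\lim_{k\to\infty}|\phi_k(z)-G_k(z)|=0$ uniformly in $z$ on each bounded interval.
   Context: ''Uniformly Lipschitz on each bounded interval'' means: for each $a\ge0$ there is a constant $L_a$ such that all the functions (for $\phi_k$: all those with $k\ge a$) are $L_a$-Lipschitz on $[0,a]$. *)

(* Defs.v *)
From Stdlib Require Import Reals Lra Lia.
From Coquelicot Require Import Coquelicot.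
Open Scope R_scope.

Definition is_pgf_coeffs (p : nat -> R) : Prop :=
  (forall i, 0 <= p i) /\ is_series p 1.

Definition pgf (p : nat -> R) (s : R) : R := Series (fun i => p i * s ^ i).

Definition G_fun (gamma : nat -> R) (p : nat -> nat -> R) (k : nat) (z : R) : R :=
  INR k * gamma k * (pgf (p k) (exp (- z / INR k)) - exp (- z / INR k)).

Definition phi_fun (gamma : nat -> R) (p : nat -> nat -> R) (k : nat) (z : R) : R :=
  INR k * gamma k * (pgf (p k) (1 - z / INR k) - (1 - z / INR k)).

Definition unif_lip_G (gamma : nat -> R) (p : nat -> nat -> R) : Prop :=
  forall a : R, 0 <= a -> exists L : R,
    forall k : nat, (1 <= k)%nat ->
    forall x y : R, 0 <= x <= a -> 0 <= y <= a ->
      Rabs (G_fun gamma p k x - G_fun gamma p k y) <= L * Rabs (x - y).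

Definition unif_lip_phi (gamma : nat -> R) (p : nat -> nat -> R) : Prop :=
  forall a : R, 0 <= a -> exists L : R,
    forall k : nat, (1 <= k)%nat -> a <= INR k ->
    forall x y : R, 0 <= x <= a -> 0 <= y <= a ->
      Rabs (phi_fun gamma p k x - phi_fun gamma p k y) <= L * Rabs (x - y).

(* Main.v *)
Require Import Defs.
From Stdlib Require Import Reals Lra Lia.
From Coquelicot Require Import Coquelicot.
Open Scope R_scope.
From Stdlib Require Import Reals.

Fixpoint q (i : nat) (t s : R) : R :=
  match i with O => 0 | S j => s ^ j + t * q j t s end.

Lemma q_id i t s : s ^ i - t ^ i = (s - t) * q i t s.
Proof. induction i; simpl. ring. assert (s * s ^ i - t * t ^ i = s ^ i * (s - t) + t * (s ^ i - t ^ i)) as -> by ring. rewrite IHi. ring. Qed.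

Lemma q_nonneg i t s : 0 <= t -> 0 <= s -> 0 <= q i t s.
Proof. intros; induction i; simpl. lra. pose proof (pow_le s i H0). nra. Qed.

Lemma q_mono i t s t' s' : 0 <= t <= t' -> 0 <= s <= s' -> q i t s <= q i t' s'.
Proof. intros; induction i; simpl. lra.
  pose proof (pow_incr s s' i H0). pose proof (q_nonneg i t s ltac:(lra) ltac:(lra)). nra. Qed.

Definition Sl (p : nat -> R) t s := Series (fun i => p i * q i t s).

Lemma ex_pow p s : is_pgf_coeffs p -> 0 <= s <= 1 -> ex_series (fun i => p i * s ^ i).
Proof. intros [Hp Hs] Hs1. apply (@ex_series_le R_AbsRing R_CompleteNormedModule _ p).
  - intros n. change (norm (p n * s ^ n)) with (Rabs (p n * s ^ n)).
    rewrite Rabs_right. 2: { apply Rle_ge, Rmult_le_pos; auto. apply pow_le; lra. }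
    pose proof (pow_le s n ltac:(lra)). 
    specialize (Hp n). assert (s ^ n <= 1) by (rewrite <- (pow1 n); apply pow_incr; lra). nra.
  - eexists; eauto.
Qed.

Lemma Sl_ex p t s : is_pgf_coeffs p -> 0 <= t -> t < s -> s <= 1 ->
  ex_series (fun i => p i * q i t s) /\ pgf p s - pgf p t = (s - t) * Sl p t s.
Proof. intros Hp Ht Hts Hs.
  assert (E : forall i, p i * q i t s = / (s - t) * (p i * s ^ i - p i * t ^ i)).
  { intros i. assert (p i * s ^ i - p i * t ^ i = p i * ((s - t) * q i t s)) as ->
      by (rewrite <- q_id; ring). field. lra. }
  pose proof (ex_pow p s Hp ltac:(lra)) as Es. pose proof (ex_pow p t Hp ltac:(lra)) as Et.
  assert (X : ex_series (fun i => / (s - t) * (p i * s ^ i - p i * t ^ i))).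
  { apply (@ex_series_scal_l R_AbsRing R_NormedModule).
    apply (@ex_series_minus R_AbsRing R_NormedModule); auto. }
  split.
  - eapply ex_series_ext. 2: exact X. intros; symmetry; apply E.
  - unfold Sl, pgf. rewrite (Series_ext _ _ E), Series_scal_l, Series_minus; auto. field. lra.
Qed.

Lemma Sl_nonneg p t s : is_pgf_coeffs p -> 0 <= t -> t < s -> s <= 1 -> 0 <= Sl p t s.
Proof. intros Hp Ht Hts Hs. unfold Sl. destruct (Sl_ex p t s Hp Ht Hts Hs) as [X _].
  replace 0 with (Series (fun n => 0 * (p n * q n t s))) by (rewrite Series_scal_l; ring). apply Series_le; auto.
  intros n; split. lra. rewrite Rmult_0_l. apply Rmult_le_pos. apply (proj1 Hp). apply q_nonneg; lra.
Qed.

Lemma Sl_mono p t s t' s' : is_pgf_coeffs p -> 0 <= t -> t < s -> s <= 1 ->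
  t <= t' -> t' < s' -> s' <= 1 -> s <= s' -> Sl p t s <= Sl p t' s'.
Proof. intros Hp. intros. unfold Sl. apply Series_le.
  - intros n; split. apply Rmult_le_pos. apply (proj1 Hp). apply q_nonneg; lra.
    apply Rmult_le_compat_l. apply (proj1 Hp). apply q_mono; lra.
  - apply (Sl_ex p t' s'); auto; lra.
Qed.

Lemma Sl_global p c B : is_pgf_coeffs p -> 0 <= c < 1 ->
  (forall t s, c <= t -> t < s -> s <= 1 -> Sl p t s <= B) ->
  forall t s, 0 <= t -> t < s -> s <= 1 -> Sl p t s <= B.
Proof. intros Hp Hc HB t s Ht Hts Hs.
  apply Rle_trans with (Sl p (Rmax t c) 1).
  - apply Sl_mono; auto; try lra. apply Rmax_l. apply Rmax_lub_lt; lra.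
  - apply HB. apply Rmax_r. apply Rmax_lub_lt; lra. lra.
Qed.

Definition CP p c M := forall t s, c <= t -> t < s -> s <= 1 -> Rabs (Sl p t s - 1) <= M.
Definition hh p s := pgf p s - s.

Lemma hdiff p t s : is_pgf_coeffs p -> 0 <= t -> t < s -> s <= 1 ->
  hh p s - hh p t = (s - t) * (Sl p t s - 1).
Proof. intros. unfold hh. pose proof (proj2 (Sl_ex p t s H H0 H1 H2)). lra. Qed.

Lemma lip_sym (f : R -> R) (P : R -> Prop) L :
  (forall x y, P x -> P y -> x < y -> Rabs (f x - f y) <= L * Rabs (x - y)) ->
  forall x y, P x -> P y -> Rabs (f x - f y) <= L * Rabs (x - y).
Proof. intros H x y Px Py. destruct (total_order_T x y) as [[Hl|He]|Hg].
  - auto.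
  - subst. rewrite !Rminus_eq_0, Rabs_R0. lra.
  - rewrite Rabs_minus_sym, (Rabs_minus_sym x). auto.
Qed.

Lemma ln_diff s t : 0 < t -> t <= s -> ln s - ln t <= (s - t) / t.
Proof. intros. rewrite <- ln_div by lra. pose proof (exp_ineq1_le (ln (s / t))).
  rewrite exp_ln in H1. 2: { apply Rdiv_lt_0_compat; lra. }
  unfold Rdiv in *. assert (s * / t - 1 = (s - t) * / t) by (field; lra). lra.
Qed.

Lemma exp_diff u v : 0 <= u <= v -> exp (- u) - exp (- v) <= v - u.
Proof. intros. assert (exp (- v) = exp (- u) * exp (- (v - u))) by (rewrite <- exp_plus; f_equal; ring).
  rewrite H0. pose proof (exp_ineq1_le (- (v - u))).
  assert (exp (- u) <= 1) by (rewrite <- exp_0; destruct (Req_dec u 0); [subst; rewrite Ropp_0; lra|left; apply exp_increasing; lra]).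
  pose proof (exp_pos (- u)). pose proof (exp_pos (- (v - u))). nra.
Qed.

Lemma exp_le1 x : 0 <= x -> exp (- x) <= 1.
Proof. intros. rewrite <- exp_0. destruct (Req_dec x 0). subst; rewrite Ropp_0; lra.
  left; apply exp_increasing; lra. Qed.

Lemma exp_mono x y : x <= y -> exp x <= exp y.
Proof. intros [H|H]. left; apply exp_increasing; auto. subst; lra. Qed.

Lemma exp_quad x : 0 <= x -> exp (- x) - (1 - x) <= x ^ 2.
Proof. intros. rewrite exp_Ropp. pose proof (exp_ineq1_le x).
  assert (/ exp x <= / (1 + x)) by (apply Rinv_le_contravar; lra).
  assert (/ (1 + x) - (1 - x) = x ^ 2 / (1 + x)) by (field; lra).
  assert (x ^ 2 / (1 + x) <= x ^ 2).
  { unfold Rdiv. pose proof (pow2_ge_0 x). assert (/ (1 + x) <= 1).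
    { rewrite <- Rinv_1. apply Rinv_le_contravar; lra. }
    assert (0 <= / (1 + x)) by (left; apply Rinv_0_lt_compat; lra). nra. }
  lra.
Qed.

Lemma exp_half x : 0 <= x <= 1/2 -> exp (- (2 * x)) <= 1 - x.
Proof. intros. rewrite exp_Ropp. pose proof (exp_ineq1_le (2 * x)).
  apply Rle_trans with (/ (1 + 2 * x)). apply Rinv_le_contravar; lra.
  apply Rmult_le_reg_l with (1 + 2 * x). lra. rewrite Rinv_r by lra. nra.
Qed.

Lemma one_minus_le_exp x : 1 - x <= exp (- x).
Proof. pose proof (exp_ineq1_le (- x)). lra. Qed.

Section Links.
Variables (gamma : nat -> R) (p : nat -> nat -> R).
Hypothesis Hgpos : forall k, 0 < gamma k.
Hypothesis Hpgf : forall k, is_pgf_coeffs (p k).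

Lemma phi_eq k z : phi_fun gamma p k z = INR k * gamma k * hh (p k) (1 - z / INR k).
Proof. reflexivity. Qed.
Lemma G_eq k z : G_fun gamma p k z = INR k * gamma k * hh (p k) (exp (- z / INR k)).
Proof. reflexivity. Qed.

Lemma phi_from_CP k a c M : (1 <= k)%nat -> 0 <= a <= INR k -> 0 <= c <= 1 - a / INR k ->
  CP (p k) c M -> forall x y, 0 <= x <= a -> 0 <= y <= a ->
  Rabs (phi_fun gamma p k x - phi_fun gamma p k y) <= gamma k * M * Rabs (x - y).
Proof. intros Hk Ha Hc HM. assert (HK : 1 <= INR k) by (apply (le_INR 1); auto).
  pose proof (Hgpos k).
  apply (lip_sym _ (fun x => 0 <= x <= a)). intros x y Hx Hy Hxy.
  rewrite !phi_eq. set (K := INR k) in *.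
  assert (a / K <= 1) by (apply Rmult_le_reg_l with K; [lra|]; unfold Rdiv; field_simplify; lra).
  assert (y / K <= a / K) by (unfold Rdiv; apply Rmult_le_compat_r; [left; apply Rinv_0_lt_compat; lra|lra]).
  assert (x / K < y / K) by (unfold Rdiv; apply Rmult_lt_compat_r; [apply Rinv_0_lt_compat; lra|lra]).
  assert (0 <= x / K) by (apply Rdiv_le_0_compat; lra).
  rewrite <- Rmult_minus_distr_l, (hdiff (p k)); auto; try lra.
  specialize (HM (1 - y / K) (1 - x / K) ltac:(lra) ltac:(lra) ltac:(lra)).
  assert (E : 1 - x / K - (1 - y / K) = (y - x) / K) by (field; lra). rewrite E.
  rewrite Rabs_minus_sym, (Rabs_right (y - x)) by lra.
  rewrite !Rabs_mult, (Rabs_right K), (Rabs_right (gamma k)), (Rabs_right ((y - x) / K)) by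
    (try apply Rle_ge, Rdiv_le_0_compat; lra).
  assert (E2 : K * gamma k * ((y - x) / K) = gamma k * (y - x)) by (field; lra).
  rewrite <- Rmult_assoc, E2.
  apply Rle_trans with (gamma k * (y - x) * M). apply Rmult_le_compat_l; [nra|lra]. lra.
Qed.

Lemma CP_from_phi k a L : (1 <= k)%nat -> 0 <= a <= INR k ->
  (forall x y, 0 <= x <= a -> 0 <= y <= a ->
   Rabs (phi_fun gamma p k x - phi_fun gamma p k y) <= L * Rabs (x - y)) ->
  CP (p k) (1 - a / INR k) (L / gamma k).
Proof. intros Hk Ha HL t s Ht Hts Hs. assert (HK : 1 <= INR k) by (apply (le_INR 1); auto).
  pose proof (Hgpos k). set (K := INR k) in *.
  assert (a / K <= 1) by (apply Rmult_le_reg_l with K; [lra|]; unfold Rdiv; field_simplify; lra).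
  assert (Ex : a = K * (a / K)) by (field; lra).
  specialize (HL (K * (1 - s)) (K * (1 - t)) ltac:(nra) ltac:(nra)).
  rewrite !phi_eq in HL. fold K in HL.
  replace (1 - K * (1 - s) / K) with s in HL by (field; lra).
  replace (1 - K * (1 - t) / K) with t in HL by (field; lra).
  rewrite <- Rmult_minus_distr_l, (hdiff (p k)) in HL; auto; try lra.
  replace (K * (1 - s) - K * (1 - t)) with (- (K * (s - t))) in HL by ring.
  rewrite Rabs_Ropp, !Rabs_mult, (Rabs_right K), (Rabs_right (gamma k)), (Rabs_right (s - t)) in HL by lra.
  apply Rmult_le_reg_l with (gamma k * (K * (s - t))). apply Rmult_lt_0_compat; nra.
  replace (gamma k * (K * (s - t)) * (L / gamma k)) with (L * (K * (s - t))) by (field; lra).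
  nra.
Qed.

Lemma G_from_CP k a c M : (1 <= k)%nat -> 0 <= a -> 0 <= c <= exp (- a / INR k) -> 0 <= M ->
  CP (p k) c M -> forall x y, 0 <= x <= a -> 0 <= y <= a ->
  Rabs (G_fun gamma p k x - G_fun gamma p k y) <= gamma k * M * Rabs (x - y).
Proof. intros Hk Ha Hc HM0 HM. assert (HK : 1 <= INR k) by (apply (le_INR 1); auto).
  pose proof (Hgpos k).
  apply (lip_sym _ (fun x => 0 <= x <= a)). intros x y Hx Hy Hxy.
  rewrite !G_eq. set (K := INR k) in *.
  assert (y / K <= a / K) by (unfold Rdiv; apply Rmult_le_compat_r; [left; apply Rinv_0_lt_compat; lra|lra]).
  assert (x / K < y / K) by (unfold Rdiv; apply Rmult_lt_compat_r; [apply Rinv_0_lt_compat; lra|lra]).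
  assert (0 <= x / K) by (apply Rdiv_le_0_compat; lra).
  replace (- x / K) with (- (x / K)) by (field; lra).
  replace (- y / K) with (- (y / K)) by (field; lra).
  replace (- a / K) with (- (a / K)) in Hc by (field; lra).
  assert (exp (- (a / K)) <= exp (- (y / K))) by (apply exp_mono; lra).
  assert (exp (- (y / K)) < exp (- (x / K))) by (apply exp_increasing; lra).
  pose proof (exp_le1 (x / K) ltac:(lra)).
  pose proof (exp_diff (x / K) (y / K) ltac:(lra)).
  rewrite <- Rmult_minus_distr_l, (hdiff (p k)); auto; try lra.
  specialize (HM (exp (- (y / K))) (exp (- (x / K))) ltac:(lra) ltac:(lra) ltac:(lra)).
  rewrite Rabs_minus_sym, (Rabs_right (y - x)) by lra.
  rewrite !Rabs_mult, (Rabs_right K), (Rabs_right (gamma k)), (Rabs_right (_ - _)) by lra.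
  assert (E2 : y / K - x / K = (y - x) / K) by (field; lra). rewrite E2 in *.
  apply Rle_trans with (K * gamma k * ((y - x) / K) * M).
  - assert (D : (exp (- (x / K)) - exp (- (y / K))) * Rabs (Sl (p k) (exp (- (y / K))) (exp (- (x / K))) - 1) <= (y - x) / K * M).
    { apply Rmult_le_compat; try lra. apply Rabs_pos. }
    assert (0 <= K * gamma k) by nra.
    rewrite (Rmult_assoc (K * gamma k) ((y - x) / K)). apply Rmult_le_compat_l; lra.
  - right. field. lra.
Qed.

Lemma CP_from_G k b L : (1 <= k)%nat -> 0 <= b ->
  (forall x y, 0 <= x <= b -> 0 <= y <= b ->
   Rabs (G_fun gamma p k x - G_fun gamma p k y) <= L * Rabs (x - y)) ->
  CP (p k) (exp (- b / INR k)) (Rabs L * exp (b / INR k) / gamma k).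
Proof. intros Hk Hb HL t s Ht Hts Hs. assert (HK : 1 <= INR k) by (apply (le_INR 1); auto).
  pose proof (Hgpos k). set (K := INR k) in *.
  pose proof (exp_pos (- b / K)).
  assert (Lt : ln t < ln s) by (apply ln_increasing; lra).
  assert (Ls : ln s <= 0) by (rewrite <- ln_1; apply ln_le; lra).
  assert (Lb : - b / K <= ln t) by (rewrite <- (ln_exp (- b / K)); apply ln_le; lra).
  assert (Lb' : - b <= K * ln t).
  { apply Rmult_le_compat_l with (r := K) in Lb; [|lra]. 
    replace (K * (- b / K)) with (- b) in Lb by (field; lra). lra. }
  specialize (HL (- (K * ln s)) (- (K * ln t)) ltac:(nra) ltac:(nra)).
  rewrite !G_eq in HL. fold K in HL.
  replace (- - (K * ln s) / K) with (ln s) in HL by (field; lra).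
  replace (- - (K * ln t) / K) with (ln t) in HL by (field; lra).
  rewrite !exp_ln in HL by lra.
  rewrite <- Rmult_minus_distr_l, (hdiff (p k)) in HL; auto; try lra.
  replace (- (K * ln s) - - (K * ln t)) with (- (K * (ln s - ln t))) in HL by ring.
  rewrite Rabs_Ropp, !Rabs_mult, (Rabs_right K), (Rabs_right (gamma k)), (Rabs_right (s - t)),
    (Rabs_right (ln s - ln t)) in HL by lra.
  pose proof (ln_diff s t ltac:(lra) ltac:(lra)).
  assert (It : / t <= exp (b / K)).
  { replace (exp (b / K)) with (/ exp (- b / K)).
    apply Rinv_le_contravar; lra.
    rewrite <- exp_Ropp. f_equal. field. lra. }
  assert (HL2 : K * gamma k * ((s - t) * Rabs (Sl (p k) t s - 1)) <= Rabs L * (K * ((s - t) * exp (b / K)))).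
  { apply Rle_trans with (1 := HL). apply Rle_trans with (Rabs L * (K * (ln s - ln t))).
    apply Rmult_le_compat_r. nra. apply Rle_abs.
    apply Rmult_le_compat_l. apply Rabs_pos. apply Rmult_le_compat_l. lra.
    unfold Rdiv in H1. apply Rle_trans with (1 := H1). apply Rmult_le_compat_l; lra. }
  apply Rmult_le_reg_l with (gamma k * (K * (s - t))). apply Rmult_lt_0_compat; nra.
  replace (gamma k * (K * (s - t)) * (Rabs L * exp (b / K) / gamma k)) with (Rabs L * (K * ((s - t) * exp (b / K)))) by (field; lra).
  nra.
Qed.
End Links.

Lemma CP_mono p c c' M M' : c <= c' -> M <= M' -> CP p c M -> CP p c' M'.
Proof. intros Hc HM H t s Ht Hts Hs. specialize (H t s ltac:(lra) Hts Hs). lra. Qed.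

Lemma CP_global p c M : is_pgf_coeffs p -> 0 <= c < 1 -> CP p c M -> CP p 0 (Rmax 1 M).
Proof. intros Hp Hc H t s Ht Hts Hs.
  assert (B : Sl p t s <= 1 + M).
  { apply (Sl_global p c); auto. intros t' s' H1 H2 H3. specialize (H t' s' H1 H2 H3).
    apply Rabs_le_between in H. lra. }
  pose proof (Sl_nonneg p t s Hp Ht Hts Hs). apply Rabs_le. split.
  pose proof (Rmax_l 1 M); lra. pose proof (Rmax_r 1 M); lra.
Qed.

Lemma fin_choice (P : nat -> R -> Prop) :
  (forall k M M', M <= M' -> P k M -> P k M') -> forall N,
  (forall k, (k <= N)%nat -> exists M, P k M) -> exists M, forall k, (k <= N)%nat -> P k M.
Proof. intros Hm N. induction N; intros H.
  - destruct (H 0%nat (le_n 0)) as [M HM]. exists M. intros k Hk. inversion Hk; subst; auto.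
  - destruct IHN as [M1 H1]. intros k Hk; apply H; lia.
    destruct (H (S N) (le_n _)) as [M2 H2]. exists (Rmax M1 M2). intros k Hk.
    destruct (Nat.eq_dec k (S N)). subst. apply (Hm _ M2); auto. apply Rmax_r.
    apply (Hm _ M1). apply Rmax_l. apply H1; lia.
Qed.

Lemma big_nat x : exists N : nat, x < INR N.
Proof. destruct (Rle_or_lt 0 x) as [H|H].
  - destruct (nfloor_ex x H) as [n Hn]. exists (S n). rewrite S_INR. lra.
  - exists 0%nat. simpl. lra.
Qed.

Section Main.
Variables (gamma : nat -> R) (p : nat -> nat -> R).
Hypothesis Hgpos : forall k, 0 < gamma k.
Hypothesis Hpgf : forall k, is_pgf_coeffs (p k).

Lemma exp_lt1 x : 0 < x -> exp (- x) < 1.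
Proof. intros. rewrite <- exp_0. apply exp_increasing. lra. Qed.

Lemma inv_pos_le k a : (1 <= k)%nat -> 0 <= a <= INR k -> 0 <= a / INR k <= 1.
Proof. intros Hk Ha. assert (1 <= INR k) by (apply (le_INR 1); auto). split.
  apply Rdiv_le_0_compat; lra.
  apply Rmult_le_reg_l with (INR k); [lra|]. unfold Rdiv. field_simplify; lra. Qed.

Lemma G_to_phi : unif_lip_G gamma p -> unif_lip_phi gamma p.
Proof. intros HG a Ha.
  destruct (HG (2 * a) ltac:(lra)) as [L2 HL2]. destruct (HG 1 ltac:(lra)) as [L1 HL1].
  destruct (big_nat (2 * a)) as [N HN].
  destruct (fin_choice (fun k M => (1 <= k)%nat -> a <= INR k -> forall x y, 0 <= x <= a -> 0 <= y <= a ->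
      Rabs (phi_fun gamma p k x - phi_fun gamma p k y) <= M * Rabs (x - y))) with (N := N) as [Ms HMs].
  { intros k M M' HM H Hk Hak x y Hx Hy. specialize (H Hk Hak x y Hx Hy).
    pose proof (Rabs_pos (x - y)). nra. }
  { intros k _. destruct (Compare_dec.le_lt_dec 1 k) as [Hk|Hk]; [|exists 0; intros; lia].
    assert (HK : 1 <= INR k) by (apply (le_INR 1); auto).
    pose proof (CP_from_G gamma p Hgpos Hpgf k 1 L1 Hk ltac:(lra) (HL1 k Hk)) as C.
    apply CP_global in C. 2: auto.
    2: { split. left; apply exp_pos. replace (Ropp 1 / INR k) with (- (1 / INR k)) by (field; lra).
         apply exp_lt1. apply Rdiv_lt_0_compat; lra. }
    exists (gamma k * Rmax 1 (Rabs L1 * exp (1 / INR k) / gamma k)). intros _ Hak. apply (phi_from_CP gamma p Hgpos Hpgf k a 0 _ Hk); auto; try lra.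
    pose proof (inv_pos_le k a Hk ltac:(lra)). lra. }
  exists (Rmax Ms (Rabs L2 * exp 1)). intros k Hk Hak x y Hx Hy.
  assert (HK : 1 <= INR k) by (apply (le_INR 1); auto).
  pose proof (Rabs_pos (x - y)).
  destruct (Rlt_or_le (INR k) (INR N)) as [Hs|Hl].
  - apply INR_lt in Hs. eapply Rle_trans. apply (HMs k); auto; lia.
    apply Rmult_le_compat_r; auto. apply Rmax_l.
  - pose proof (CP_from_G gamma p Hgpos Hpgf k (2 * a) L2 Hk ltac:(lra) (HL2 k Hk)) as C.
    pose proof (inv_pos_le k a Hk ltac:(lra)) as Hak'.
    assert (a / INR k <= 1 / 2).
    { apply Rmult_le_reg_l with (INR k); [lra|]. unfold Rdiv. field_simplify; lra. }
    pose proof (Hgpos k).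
    apply (CP_mono _ _ (1 - a / INR k) _ (Rabs L2 * exp 1 / gamma k)) in C.
    + eapply Rle_trans. apply (phi_from_CP gamma p Hgpos Hpgf k a (1 - a / INR k) (Rabs L2 * exp 1 / gamma k) Hk); auto; lra.
      apply Rmult_le_compat_r; auto. apply Rle_trans with (Rabs L2 * exp 1).
      right; field; lra. apply Rmax_r.
    + replace (- (2 * a) / INR k) with (- (2 * (a / INR k))) by (field; lra). apply exp_half; lra.
    + unfold Rdiv. apply Rmult_le_compat_r. left; apply Rinv_0_lt_compat; lra.
      apply Rmult_le_compat_l. apply Rabs_pos. apply exp_mono.
      apply Rmult_le_reg_l with (INR k); [lra|]. field_simplify; lra.
Qed.

Lemma phi_to_G : unif_lip_phi gamma p -> unif_lip_G gamma p.
Proof. intros HP a Ha.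
  destruct (HP a Ha) as [La HLa]. destruct (HP 1 ltac:(lra)) as [L1 HL1].
  destruct (big_nat a) as [N HN].
  destruct (fin_choice (fun k M => (1 <= k)%nat -> forall x y, 0 <= x <= a -> 0 <= y <= a ->
      Rabs (G_fun gamma p k x - G_fun gamma p k y) <= M * Rabs (x - y))) with (N := N) as [Ms HMs].
  { intros k M M' HM H Hk x y Hx Hy. specialize (H Hk x y Hx Hy).
    pose proof (Rabs_pos (x - y)). nra. }
  { intros k _. destruct (Compare_dec.le_lt_dec 1 k) as [Hk|Hk]; [|exists 0; intros; lia].
    assert (HK : 1 <= INR k) by (apply (le_INR 1); auto).
    pose proof (CP_from_phi gamma p Hgpos Hpgf k 1 L1 Hk ltac:(lra) (HL1 k Hk HK)) as C.
    pose proof (inv_pos_le k 1 Hk ltac:(lra)).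
    apply CP_global in C. 2: auto.
    2: { split. lra. assert (0 < 1 / INR k) by (apply Rdiv_lt_0_compat; lra). lra. }
    exists (gamma k * Rmax 1 (L1 / gamma k)). intros _. apply (G_from_CP gamma p Hgpos Hpgf k a 0 _ Hk); auto.
    split. lra. left; apply exp_pos. pose proof (Rmax_l 1 (L1 / gamma k)); lra. }
  exists (Rmax Ms (Rabs La)). intros k Hk x y Hx Hy.
  assert (HK : 1 <= INR k) by (apply (le_INR 1); auto).
  pose proof (Rabs_pos (x - y)).
  destruct (Rlt_or_le (INR k) (INR N)) as [Hs|Hl].
  - apply INR_lt in Hs. eapply Rle_trans. apply (HMs k); auto; lia.
    apply Rmult_le_compat_r; auto. apply Rmax_l.
  - pose proof (Hgpos k).
    pose proof (CP_from_phi gamma p Hgpos Hpgf k a La Hk ltac:(lra) (HLa k Hk ltac:(lra))) as C.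
    pose proof (inv_pos_le k a Hk ltac:(lra)) as Hak'.
    apply (CP_mono _ _ (1 - a / INR k) _ (Rabs La / gamma k)) in C.
    + eapply Rle_trans. apply (G_from_CP gamma p Hgpos Hpgf k a (1 - a / INR k) (Rabs La / gamma k) Hk); auto.
      split. lra. replace (- a / INR k) with (- (a / INR k)) by (field; lra). apply one_minus_le_exp.
      apply Rdiv_le_0_compat. apply Rabs_pos. lra.
      apply Rmult_le_compat_r; auto. apply Rle_trans with (Rabs La).
      right; field; lra. apply Rmax_r.
    + lra.
    + unfold Rdiv. apply Rmult_le_compat_r. left; apply Rinv_0_lt_compat; lra. apply Rle_abs.
Qed.
End Main.

Lemma conv (gamma : nat -> R) (p : nat -> nat -> R)
  (Hgpos : forall k, 0 < gamma k) (Hpgf : forall k, is_pgf_coeffs (p k)) :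
  unif_lip_phi gamma p ->
   forall a : R, 0 <= a -> forall eps : R, 0 < eps ->
   exists N : nat, forall k : nat, (N <= k)%nat -> (1 <= k)%nat -> a <= INR k ->
   forall z : R, 0 <= z <= a ->
     Rabs (phi_fun gamma p k z - G_fun gamma p k z) < eps.
Proof. intros HP a Ha eps Heps. destruct (HP a Ha) as [L HL].
  destruct (big_nat (Rabs L * a ^ 2 / eps)) as [N HN].
  exists (S N). intros k HNk Hk Hak z Hz.
  assert (HK : 1 <= INR k) by (apply (le_INR 1); auto).
  assert (HNK : INR (S N) <= INR k) by (apply le_INR; auto). rewrite S_INR in HNK.
  pose proof (Hgpos k).
  pose proof (CP_from_phi gamma p Hgpos Hpgf k a L Hk ltac:(lra) (HL k Hk Hak)) as C.
  pose proof (inv_pos_le k a Hk ltac:(lra)) as Hak'.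
  rewrite phi_eq, G_eq. set (K := INR k) in *.
  replace (- z / K) with (- (z / K)) by (field; lra).
  assert (z / K <= a / K) by (unfold Rdiv; apply Rmult_le_compat_r; [left; apply Rinv_0_lt_compat; lra|lra]).
  assert (0 <= z / K) by (apply Rdiv_le_0_compat; lra).
  destruct (Req_dec z 0) as [Z|Z].
  { subst. replace (0 / K) with 0 by (field; lra). rewrite Ropp_0, exp_0.
    replace (1 - 0) with 1 by ring. rewrite Rminus_eq_0, Rabs_R0. auto. }
  assert (0 < z / K) by (apply Rdiv_lt_0_compat; lra).
  pose proof (exp_ineq1 (- (z / K)) ltac:(lra)).
  pose proof (exp_le1 (z / K) ltac:(lra)).
  pose proof (exp_quad (z / K) ltac:(lra)).
  rewrite <- Rmult_minus_distr_l.
  replace (hh (p k) (1 - z / K) - hh (p k) (exp (- (z / K)))) with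
    (- (hh (p k) (exp (- (z / K))) - hh (p k) (1 - z / K))) by ring.
  rewrite (hdiff (p k)); auto; try lra.
  specialize (C (1 - z / K) (exp (- (z / K))) ltac:(lra) ltac:(lra) ltac:(lra)).
  assert (0 <= exp (- (z / K)) - (1 - z / K)) by lra.
  set (d := exp (- (z / K)) - (1 - z / K)) in *.
  set (A := Sl (p k) (1 - z / K) (exp (- (z / K)))) in *.
  idtac.
  rewrite <- Ropp_mult_distr_r, Rabs_Ropp, !Rabs_mult, (Rabs_right K), (Rabs_right (gamma k)), (Rabs_right d) by lra.
  assert (HA : gamma k * Rabs (A - 1) <= Rabs L).
  { apply Rmult_le_compat_l with (r := gamma k) in C; [|lra].
    replace (gamma k * (L / gamma k)) with L in C by (field; lra).
    pose proof (Rle_abs L). lra. }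
  assert (Hd : d <= a ^ 2 / K ^ 2).
  { apply Rle_trans with ((z / K) ^ 2). auto.
    replace (a ^ 2 / K ^ 2) with ((a / K) ^ 2) by (field; lra). apply pow_incr; lra. }
  apply Rle_lt_trans with (K * (Rabs L * (a ^ 2 / K ^ 2))).
  { assert (0 <= d) by lra. pose proof (Rabs_pos (A - 1)).
    apply Rle_trans with (K * (gamma k * Rabs (A - 1)) * d). right; ring.
    apply Rle_trans with (K * Rabs L * d). apply Rmult_le_compat_r; [lra|]. apply Rmult_le_compat_l; lra.
    rewrite Rmult_assoc. apply Rmult_le_compat_l. lra. apply Rmult_le_compat_l. apply Rabs_pos. auto. }
  replace (K * (Rabs L * (a ^ 2 / K ^ 2))) with (Rabs L * a ^ 2 / K) by (field; lra).
  apply Rmult_lt_reg_r with (K / eps). apply Rdiv_lt_0_compat; lra.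
  replace (Rabs L * a ^ 2 / K * (K / eps)) with (Rabs L * a ^ 2 / eps) by (field; lra).
  replace (eps * (K / eps)) with K by (field; lra). lra.
Qed.

Theorem proposition2p1p1 (gamma : nat -> R) (p : nat -> nat -> R)
  (Hgpos : forall k, 0 < gamma k)
  (Hginf : is_lim_seq gamma p_infty)
  (Hpgf : forall k, is_pgf_coeffs (p k)) :
  (unif_lip_G gamma p <-> unif_lip_phi gamma p) /\
  (unif_lip_G gamma p ->
   forall a : R, 0 <= a -> forall eps : R, 0 < eps ->
   exists N : nat, forall k : nat, (N <= k)%nat -> (1 <= k)%nat -> a <= INR k ->
   forall z : R, 0 <= z <= a ->
     Rabs (phi_fun gamma p k z - G_fun gamma p k z) < eps).
Proof.
  split. split. apply G_to_phi; auto. apply phi_to_G; auto.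
  intros HG. apply conv; auto. apply G_to_phi; auto.
Qed.
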